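(* Let $\gamma_N>0$ with $\gamma_N\to0$, and for $a>0$ put $a_N=a\gamma_N$. For each $N$ let $P_{N,a_N}$ be the probability on sequences $(n_j)_{j\ge0}$ of nonnegative integers with $\sum_jn_j=N$ given by $P_{N,a_N}((n_j))\propto e^{-a_N\sum_jjn_j}$, and $\langle n_0\rangle_{N,a_N}$ the expectation of $n_0$. If $N\gamma_N/\ln N\to0$, then for every $a>0$, $\frac1N\langle n_0\rangle_{N,a_N}\to0$ (i.e. $T_c=0$: no Bose–Einstein condensation at any positive temperature). If $N\gamma_N/\ln N\to\infty$, then for every $a>0$, $\frac1N\langle n_0\rangle_{N,a_N}\to1$ (i.e. $T_c=\infty$ and complete Bose–Einstein condensation at all finite temperatures).
   Context: This is the canonical ensemble of $N$ noninteracting bosons in a one-dimensional harmonic trap of scaled frequency $\omega\gamma_N$ at inverse temperature $\beta$, with $a=\hbar\omega\beta$ (so $a>0$ corresponds to $0<T<\infty$). *)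

(* Defs.v *)
From mathcomp Require Import all_boot.
From Stdlib Require Import Reals.
From Coquelicot Require Import Coquelicot.

Set Implicit Arguments.
Unset Strict Implicit.
Unset Printing Implicit Defensive.

Open Scope R_scope.

(* An occupation sequence (n_j)_{j>=0} with sum_j n_j = N and energy
   E = sum_j j n_j = M necessarily has n_j = 0 for j > M and n_j <= N.
   Hence the configurations of energy M are exactly the tables
   c : {ffun 'I_(M+1) -> 'I_(N+1)} (c j = n_j for j <= M, n_j = 0 beyond)
   with total N and energy M. *)
Definition occ (N M : nat) := {ffun 'I_M.+1 -> 'I_N.+1}.

Definition total {N M : nat} (c : occ N M) : nat :=
  (\sum_(j < M.+1) (c j : nat))%N.

Definition energy {N M : nat} (c : occ N M) : nat :=
  (\sum_(j < M.+1) (j : nat) * (c j : nat))%N.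

Definition admissible {N M : nat} (c : occ N M) : bool :=
  (total c == N) && (energy c == M).

Definition weight {N M : nat} (a : R) (c : occ N M) : R :=
  exp (- (a * INR (energy c))).

Definition Z_shell (a : R) (N M : nat) : R :=
  \big[Rplus/0]_(c : occ N M | admissible c) weight a c.

Definition n0_shell (a : R) (N M : nat) : R :=
  \big[Rplus/0]_(c : occ N M | admissible c) (INR (c ord0 : nat) * weight a c).

(* Canonical partition function Z_{N,a} = sum over all configurations,
   grouped by energy (nonnegative terms, so grouping is harmless). *)
Definition Zcan (a : R) (N : nat) : R := Series (Z_shell a N).

Definition mean_n0 (a : R) (N : nat) : R := Series (n0_shell a N) / Zcan a N.

(* Main.v *)
Require Import Defs.
From Stdlib Require Import Reals Lra Lia.
From Coquelicot Require Import Coquelicot.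
From mathcomp Require Import all_boot zify.
Set Implicit Arguments.
Unset Strict Implicit.
Unset Printing Implicit Defensive.
Open Scope nat_scope.

Section Comb.

Definition ofn {K M : nat} (c : occ K M) (j : nat) : nat :=
  if j < M.+1 then (c (inord j) : nat) else 0.

Definition mk (K M : nat) (f : nat -> nat) : occ K M :=
  [ffun j : 'I_M.+1 => (inord (f j) : 'I_K.+1)].

Lemma ofn_ord K M (c : occ K M) (j : 'I_M.+1) : ofn c j = c j.
Proof. by rewrite /ofn ltn_ord inord_val. Qed.

Lemma ofn_le K M (c : occ K M) j : ofn c j <= K.
Proof. rewrite /ofn; case: ifP => // _; have := ltn_ord (c (inord j)); lia. Qed.

Lemma ofn_out K M (c : occ K M) j : M < j -> ofn c j = 0.
Proof. by move=> h; rewrite /ofn ltnNge h. Qed.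

Lemma ofn_mk K M f j : j <= M -> f j <= K -> ofn (mk K M f) j = f j.
Proof.
move=> hj hf; rewrite /ofn /mk ifT; last by lia.
by rewrite ffunE inordK ?inordK //; lia.
Qed.

Lemma occ_eq K M (c d : occ K M) :
  (forall j, j <= M -> ofn c j = ofn d j) -> c = d.
Proof.
move=> h; apply/ffunP => j; apply: val_inj => /=.
rewrite -!ofn_ord; apply: h; have := ltn_ord j; lia.
Qed.

Lemma total_fn K M (c : occ K M) : Defs.total c = \sum_(0 <= j < M.+1) ofn c j.
Proof. by rewrite /Defs.total big_mkord; apply: eq_bigr => j _; rewrite ofn_ord. Qed.

Lemma energy_fn K M (c : occ K M) : energy c = \sum_(0 <= j < M.+1) j * ofn c j.
Proof. by rewrite /energy big_mkord; apply: eq_bigr => j _; rewrite ofn_ord. Qed.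

Lemma sum_zero_tail (F : nat -> nat) m n :
  m <= n -> (forall j, m <= j -> F j = 0) ->
  \sum_(0 <= j < n) F j = \sum_(0 <= j < m) F j.
Proof.
move=> hmn hF; rewrite (big_cat_nat _ (n:=m)) //=.
have -> : \sum_(m <= j < n) F j = 0.
  by rewrite big_nat_cond big1 // => j /andP [/andP [h1 _] _]; apply: hF.
by rewrite addn0.
Qed.

Lemma total_ext K M (c : occ K M) n : M < n ->
  \sum_(0 <= j < n) ofn c j = Defs.total c.
Proof.
move=> h; rewrite total_fn; apply: sum_zero_tail => // j hj; apply: ofn_out; lia.
Qed.

Lemma energy_ext K M (c : occ K M) n : M < n ->
  \sum_(0 <= j < n) j * ofn c j = energy c.
Proof.
move=> h; rewrite energy_fn; apply: sum_zero_tail => // j hj.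
rewrite ofn_out ?muln0 //; lia.
Qed.

Lemma term_le_sum (F : nat -> nat) m n j :
  m <= j < n -> F j <= \sum_(m <= i < n) F i.
Proof.
move=> /andP [h1 h2]; rewrite (big_cat_nat _ (n:=j)) //=; last by apply: ltnW.
rewrite [X in _ + X]big_ltn //; rewrite addnCA; apply: leq_addr.
Qed.

Lemma ofn0 K M (c : occ K M) : (c ord0 : nat) = ofn c 0.
Proof. by rewrite -(ofn_ord c ord0). Qed.

Lemma two_le_total K M (c : occ K M) j : 0 < j <= M ->
  ofn c 0 + ofn c j <= Defs.total c.
Proof.
move=> /andP [h1 h2]; rewrite total_fn (big_cat_nat _ (n:=j)) //=; last by lia.
apply: leq_add; apply: term_le_sum; lia.
Qed.

Lemma sum_delta M : \sum_(0 <= j < M.+1) (j == 0 : nat) = 1.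
Proof.
rewrite big_ltn // big_nat_cond big1 // => j /andP [/andP [h _] _].
by case: j h.
Qed.

Definition inc N M (c : occ N M) : occ N.+1 M :=
  mk N.+1 M (fun j => ofn c j + (j == 0)).
Definition dec N M (c : occ N.+1 M) : occ N M :=
  mk N M (fun j => ofn c j - (j == 0)).

Lemma ofn_inc N M (c : occ N M) j : j <= M -> ofn (inc c) j = ofn c j + (j == 0).
Proof. move=> h; rewrite ofn_mk //; have := ofn_le c j; case: (j == 0) => /=; lia. Qed.

Lemma total_inc N M (c : occ N M) : Defs.total (inc c) = Defs.total c + 1.
Proof.
rewrite !total_fn (eq_big_nat _ _ (F2 := fun j => ofn c j + (j == 0))).
  by rewrite big_split /= sum_delta.
move=> j /andP [_ h]; rewrite ofn_inc //.
Qed.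

Lemma energy_inc N M (c : occ N M) : energy (inc c) = energy c.
Proof.
rewrite !energy_fn; apply: eq_big_nat => j /andP [_ h]; rewrite ofn_inc //.
by case: j {h} => [|j] /=; rewrite ?mul0n ?addn0.
Qed.

Lemma adm_inc N M (c : occ N M) : admissible (inc c) = admissible c.
Proof. by rewrite /admissible total_inc energy_inc addn1 eqSS. Qed.

Lemma inc0 N M (c : occ N M) : (inc c ord0 : nat) = (c ord0).+1.
Proof. by rewrite !ofn0 ofn_inc // addn1. Qed.

Lemma dec_inc N M (c : occ N M) : dec (inc c) = c.
Proof.
apply: occ_eq => j hj; rewrite ofn_mk //.
  by rewrite (ofn_inc c hj) addnK.
by rewrite (ofn_inc c hj) addnK; apply: ofn_le.
Qed.

Lemma inc_dec N M (c : occ N.+1 M) : admissible c -> 0 < c ord0 -> inc (dec c) = c.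
Proof.
move=> /andP [/eqP ht _]; rewrite ofn0 => h0.
apply: occ_eq => j hj; rewrite ofn_inc // ofn_mk //.
  by case: eqP => [->|_] /=; lia.
case: j hj => [|j] hj /=; first by have := ofn_le c 0; lia.
have := two_le_total c (j := j.+1); rewrite ht; lia.
Qed.

Definition C K M := \sum_(c : occ K M | admissible c) 1.
Definition S K M := \sum_(c : occ K M | admissible c) (c ord0 : nat).

Lemma part1 N M (F : nat -> nat) :
  \sum_(c : occ N.+1 M | admissible c && (0 < c ord0)) F (c ord0)
  = \sum_(c : occ N M | admissible c) F (c ord0).+1.
Proof.
rewrite (reindex_onto (@inc N M) (@dec N M)).
  apply: eq_big => [c|c _]; last by rewrite inc0.
  by rewrite adm_inc inc0 dec_inc eqxx andbT /= andbT.
by move=> c /andP [h1 h2]; apply: inc_dec.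
Qed.

Definition up K L M (c : occ K L) : occ K M :=
  mk K M (fun j => if j is j'.+1 then ofn c j' else 0).
Definition down K L M (c : occ K M) : occ K L :=
  mk K L (fun j => ofn c j.+1).

Lemma ofn_up K L M (c : occ K L) j : j <= M ->
  ofn (up M c) j = (if j is j'.+1 then ofn c j' else 0).
Proof. by move=> h; rewrite ofn_mk //; case: j {h} => // j; apply: ofn_le. Qed.

Lemma total_up K L M (c : occ K L) : L < M -> Defs.total (up M c) = Defs.total c.
Proof.
move=> h; rewrite total_fn (eq_big_nat _ _ (F2 := fun j => if j is j'.+1 then ofn c j' else 0)).
  by rewrite big_nat_recl // add0n total_ext.
by move=> j /andP [_ hj]; rewrite ofn_up.
Qed.

Lemma energy_up K L M (c : occ K L) : L < M ->
  energy (up M c) = energy c + Defs.total c.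
Proof.
move=> h; rewrite energy_fn (eq_big_nat _ _ (F2 := fun j => j * if j is j'.+1 then ofn c j' else 0)).
  rewrite big_nat_recl // mul0n add0n.
  rewrite (eq_bigr (fun i => i * ofn c i + ofn c i)); last by move=> i _; rewrite mulSn addnC.
  by rewrite big_split /= energy_ext // total_ext.
by move=> j /andP [_ hj]; rewrite ofn_up.
Qed.

Lemma up0 K L M (c : occ K L) : (up M c ord0 : nat) = 0.
Proof. by rewrite ofn0 ofn_up. Qed.

Lemma down_up K L M (c : occ K L) : L < M -> down L (up M c) = c.
Proof.
move=> h; apply: occ_eq => j hj; rewrite ofn_mk //; last by apply: ofn_le.
rewrite ofn_up //; lia.
Qed.

Lemma energy_split K M (c : occ K M) : ofn c 0 = 0 ->
  energy c = Defs.total c + \sum_(0 <= j < M.+1) j.-1 * ofn c j.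
Proof.
move=> h0; rewrite energy_fn total_fn -big_split /=.
apply: eq_big_nat => j _; case: j => [|j] /=; first by rewrite h0.
by rewrite mulSn.
Qed.

Lemma up_down K L M (c : occ K M) : L + K = M -> 0 < K -> admissible c ->
  (c ord0 : nat) = 0 -> up M (down L c) = c.
Proof.
move=> hLK hK /andP [/eqP ht /eqP he]; rewrite ofn0 => h0.
apply: occ_eq => j hj; rewrite ofn_up //; case: j hj => [|j] hj; first by rewrite h0.
case: (leqP j L) => hjL.
  by rewrite ofn_mk //; apply: ofn_le.
rewrite ofn_out //.
have := energy_split h0; rewrite ht he.
have := term_le_sum (fun i => i.-1 * ofn c i) (m := 0) (n := M.+1) (j := j.+1).
simpl; move=> H1 H2.
have H3 : j * ofn c j.+1 <= L by lia.
case: (ofn c j.+1) H3 => // x; nia.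
Qed.

Lemma no_small K M (c : occ K M) : M < K -> admissible c -> (c ord0 : nat) = 0 -> False.
Proof.
move=> hMK /andP [/eqP ht /eqP he]; rewrite ofn0 => h0.
have := energy_split h0; rewrite ht he; lia.
Qed.

Lemma part2 N M :
  \sum_(c : occ N.+1 M | admissible c && ~~ (0 < c ord0)) 1
  = if N.+1 <= M then C N.+1 (M - N.+1) else 0.
Proof.
case: ifP => h.
  rewrite (reindex_onto (@up N.+1 (M - N.+1) M) (@down N.+1 (M - N.+1) M)).
    apply: eq_bigl => c.
    have hL : M - N.+1 < M by lia.
    rewrite up0 down_up // eqxx andbT /= andbT.
    rewrite /admissible (total_up c hL) (energy_up c hL).
    case: (Defs.total c =P N.+1) => e //=; rewrite e; apply/eqP/eqP; lia.
  move=> c /andP [hadm h0]; apply: up_down => //; first lia.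
  by move: h0; case: (c ord0 : nat).
rewrite big_pred0 // => c; apply/negbTE/negP => /andP [hadm h0].
apply: (no_small (c := c)) => //; first lia.
by move: h0; case: (c ord0 : nat).
Qed.

Lemma C_S N M : C N.+1 M = C N M + (if N.+1 <= M then C N.+1 (M - N.+1) else 0).
Proof.
rewrite {1}/C (bigID (fun c : occ N.+1 M => 0 < c ord0)) /= part2.
by rewrite (part1 N M (fun _ => 1)).
Qed.

Lemma S_S N M : S N.+1 M = S N M + C N M.
Proof.
rewrite {1}/S (bigID (fun c : occ N.+1 M => 0 < c ord0)) /=.
rewrite (part1 N M id) [X in _ + X]big1; last by move=> c /andP [_]; case: (c ord0 : nat).
rewrite addn0 /S /C -big_split /=; apply: eq_bigr => c _; by rewrite addn1.
Qed.

Lemma C_0 M : C 0 M = (M == 0).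
Proof.
have hc : forall c : occ 0 M, admissible c = (M == 0).
  move=> c; rewrite /admissible.
  have h : forall j, ofn c j = 0 by move=> j; have := ofn_le c j; lia.
  rewrite total_fn energy_fn.
  rewrite (eq_bigr (fun _ => 0)) => [|j _]; last by rewrite h.
  rewrite [X in _ && (X == _)](eq_bigr (fun _ => 0)) => [|j _]; last by rewrite h muln0.
  rewrite !big1_eq.
  by rewrite eq_sym.
rewrite /C (eq_bigl (fun _ => M == 0)) //.
case: eqP => hM /=; last by rewrite big_pred0.
by rewrite sum1_card card_ffun !card_ord exp1n.
Qed.

Lemma S_0 M : S 0 M = 0.
Proof. by rewrite /S big1 // => c _; case: (c ord0) => [[]]. Qed.

End Comb.

Open Scope R_scope.

Lemma big_INR (I : finType) (P : pred I) (F : I -> R) (f : I -> nat) (K : R) :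
  (forall i, P i -> F i = INR (f i) * K) ->
  \big[Rplus/0]_(i | P i) F i = INR (\sum_(i | P i) f i)%N * K.
Proof.
move=> h; apply: (big_rec2 (fun y1 y2 => y1 = INR y2 * K)) => [|i y1 y2 Pi ->].
  by simpl; ring.
by rewrite h // plus_INR; ring.
Qed.

Definition E (b : R) (j : nat) := exp (- (b * INR j)).

Lemma Z_shell_eq b N M : Z_shell b N M = INR (C N M) * E b M.
Proof.
apply: big_INR => c /andP [_ /eqP he]; rewrite /weight he /E /=; ring.
Qed.

Lemma n0_shell_eq b N M : n0_shell b N M = INR (S N M) * E b M.
Proof.
apply: big_INR => c /andP [_ /eqP he]; rewrite /weight he /E /=; ring.
Qed.

Definition zs b N M := INR (C N M) * E b M.
Definition ys b N M := INR (S N M) * E b M.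
Definition wz b N M := if (N.+1 <= M)%N then E b N.+1 * zs b N.+1 (M - N.+1) else 0.

Lemma E_split b N M : (N <= M)%N -> E b M = E b N * E b (M - N).
Proof.
move=> h; rewrite /E -exp_plus minus_INR; last by apply/leP.
f_equal; ring.
Qed.

Lemma zs_S b N M : zs b N.+1 M = zs b N M + wz b N M.
Proof.
rewrite /zs /wz C_S plus_INR; case: ifP => h; last by rewrite /=; ring.
rewrite (E_split b h); rewrite /zs; ring.
Qed.

Lemma ys_S b N M : ys b N.+1 M = ys b N M + zs b N M.
Proof. by rewrite /ys /zs S_S plus_INR; ring. Qed.

Lemma zs_0 b M : zs b 0 M = if M == 0%N then 1 else 0.
Proof.
rewrite /zs C_0; case: eqP => [->|_] /=; last ring.
by rewrite /E /= Rmult_0_r Ropp_0 exp_0; ring.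
Qed.

Lemma ys_0 b M : ys b 0 M = 0.
Proof. by rewrite /ys S_0 /=; ring. Qed.

Lemma E_pos b j : 0 < E b j.
Proof. exact: exp_pos. Qed.

Lemma zs_ge0 b N M : 0 <= zs b N M.
Proof. apply: Rmult_le_pos; [apply: pos_INR | apply: Rlt_le; apply: E_pos]. Qed.

Lemma ys_ge0 b N M : 0 <= ys b N M.
Proof. apply: Rmult_le_pos; [apply: pos_INR | apply: Rlt_le; apply: E_pos]. Qed.

Lemma E_lt1 b j : 0 < b -> (0 < j)%N -> E b j < 1.
Proof.
move=> hb hj; rewrite /E -exp_0; apply: exp_increasing.
have : 0 < INR j by apply: lt_0_INR; apply/ltP.
nra.
Qed.

Lemma exp_le x y : x <= y -> exp x <= exp y.
Proof. case/Rle_lt_or_eq_dec => [h|->]; [apply: Rlt_le; exact: exp_increasing | lra]. Qed.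

Lemma E_mono b i j : 0 <= b -> (i <= j)%N -> E b j <= E b i.
Proof.
move=> hb hij; rewrite /E; apply: exp_le.
have : INR i <= INR j by apply: le_INR; apply/leP.
nra.
Qed.

Lemma sum_mono (u : nat -> R) : (forall n, 0 <= u n) ->
  forall m n, (m <= n)%N -> sum_f_R0 u m <= sum_f_R0 u n.
Proof.
move=> hu m n /leP; elim => [|k _ IH]; first lra.
by simpl; have := hu k.+1; lra.
Qed.

Lemma sum_shift (u : nat -> R) k L :
  sum_f_R0 (fun M => if (k <= M)%N then u (M - k)%N else 0) L =
  if (k <= L)%N then sum_f_R0 u (L - k)%N else 0.
Proof.
elim: L => [|L IH] /=.
  by case: k.
rewrite IH; case h1 : (k <= L)%N.
  have -> : (k <= L.+1)%N by lia.
  by have -> : (L.+1 - k = (L - k).+1)%N by lia.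
case h2 : (k <= L.+1)%N; last by simpl; ring.
have -> : (L.+1 - k = 0)%N by lia.
simpl; ring.
Qed.

Lemma lim_of_sum (a : nat -> R) (l : R) : is_series a l -> is_lim_seq (sum_f_R0 a) l.
Proof. intro h. apply is_series_Reals in h. apply is_lim_seq_Reals. exact h. Qed.

Lemma sum_of_lim (a : nat -> R) (l : R) : is_lim_seq (sum_f_R0 a) l -> is_series a l.
Proof. intro h. apply is_lim_seq_Reals in h. apply is_series_Reals. exact h. Qed.

Lemma series_bound (a : nat -> R) : ex_series a -> (forall n, 0 <= a n) ->
  forall L, sum_f_R0 a L <= Series a.
Proof.
move=> [l hl] ha L; rewrite (is_series_unique _ _ hl).
apply: (is_lim_seq_incr_compare (sum_f_R0 a)); first exact: lim_of_sum.
by move=> n /=; have := ha n.+1; lra.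
Qed.

Lemma ex_series_bounded (a : nat -> R) B : (forall n, 0 <= a n) ->
  (forall L, sum_f_R0 a L <= B) -> ex_series a.
Proof.
move=> ha hB.
have [l hl] : ex_finite_lim_seq (sum_f_R0 a).
  apply: (ex_finite_lim_seq_incr _ B) => // n /=; have := ha n.+1; lra.
by exists l; apply: sum_of_lim.
Qed.

Lemma sum_zs0 b L : sum_f_R0 (zs b 0) L = 1.
Proof.
elim: L => [|L IH] /=; first by rewrite zs_0.
by rewrite IH zs_0 /=; ring.
Qed.

Lemma sum_zero L : sum_f_R0 (fun _ => 0) L = 0.
Proof. elim: L => [|L IH] /=; [done | rewrite IH; ring]. Qed.

Lemma is_series_zero : is_series (fun _ : nat => 0) 0.
Proof.
apply: sum_of_lim; apply: (is_lim_seq_ext (fun _ => 0)); last exact: is_lim_seq_const.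
by move=> n; rewrite sum_zero.
Qed.

Lemma Z0_series b : is_series (zs b 0) 1.
Proof.
apply: sum_of_lim; apply: (is_lim_seq_ext (fun _ => 1)); last exact: is_lim_seq_const.
by move=> n; rewrite sum_zs0.
Qed.

Lemma sum_scal c (u : nat -> R) n : sum_f_R0 (fun k => c * u k) n = c * sum_f_R0 u n.
Proof. elim: n => [|n IH] /=; [done | rewrite IH; ring]. Qed.

Lemma sum_wz b N L : sum_f_R0 (wz b N) L <= E b N.+1 * sum_f_R0 (zs b N.+1) L.
Proof.
have -> : sum_f_R0 (wz b N) L = if (N.+1 <= L)%N
      then sum_f_R0 (fun k => E b N.+1 * zs b N.+1 k) (L - N.+1) else 0.
  by rewrite -sum_shift.
have h0 : 0 <= sum_f_R0 (zs b N.+1) L.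
  have := sum_mono (zs_ge0 b N.+1) (leq0n L); simpl; have := zs_ge0 b N.+1 0; lra.
case: ifP => h; last by have := E_pos b N.+1; nra.
rewrite sum_scal; apply: Rmult_le_compat_l; first exact: Rlt_le (E_pos _ _).
apply: sum_mono; [exact: zs_ge0 | exact: leq_subr].
Qed.

Lemma sum_zsS b N L : sum_f_R0 (zs b N.+1) L = sum_f_R0 (zs b N) L + sum_f_R0 (wz b N) L.
Proof. rewrite -sum_plus; apply PartSum.sum_eq => i _; by rewrite zs_S. Qed.

Lemma ex_zs b N : 0 < b -> ex_series (zs b N).
Proof.
move=> hb; elim: N => [|N IH]; first by exists 1; exact: Z0_series.
have hE := @E_lt1 b N.+1 hb (ltn0Sn N).
have hE0 := E_pos b N.+1.
apply: (ex_series_bounded (B := Series (zs b N) * / (1 - E b N.+1))); first exact: zs_ge0.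
move=> L.
set P := sum_f_R0 (zs b N.+1) L.
have h1 := sum_wz b N L.
have h2 := series_bound IH (zs_ge0 b N) L.
have hP : P * (1 - E b N.+1) <= Series (zs b N).
  have := sum_zsS b N L; move: h1 h2; rewrite -/P; nra.
have -> : P = P * (1 - E b N.+1) * / (1 - E b N.+1) by field; lra.
apply: Rmult_le_compat_r => //; apply: Rlt_le; apply: Rinv_0_lt_compat; lra.
Qed.

Lemma ex_wz b N : 0 < b -> ex_series (wz b N).
Proof.
move=> hb; apply: (ex_series_ext (fun M => plus (zs b N.+1 M) (opp (zs b N M)))).
  by move=> M; rewrite zs_S /plus /opp /=; rewrite /Rplus_def; ring.
by apply: ex_series_minus; apply: ex_zs.
Qed.


Lemma Z_rec b N : 0 < b ->
  Series (zs b N) = (1 - E b N.+1) * Series (zs b N.+1).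
Proof.
move=> hb.
have e1 : Series (zs b N.+1) = Series (zs b N) + Series (wz b N).
  rewrite -Series_plus; [|exact: ex_zs|exact: ex_wz].
  by apply: Series_ext => M; rewrite zs_S.
have e2 : Series (wz b N) = E b N.+1 * Series (zs b N.+1).
  rewrite (Series_incr_n_aux (wz b N) N.+1).
    rewrite -Series_scal_l; apply: Series_ext => k.
    rewrite /wz plusE leq_addr addKn //.
  move=> k /ltP hk; rewrite /wz ifF //; apply/negbTE; rewrite -ltnNge //.
rewrite e2 in e1; rewrite Rmult_minus_distr_r Rmult_1_l; lra.
Qed.

Lemma ex_ys b N : 0 < b -> ex_series (ys b N).
Proof.
move=> hb; elim: N => [|N IH].
  exists 0; apply: (is_series_ext (fun _ => 0)); last exact: is_series_zero.
  by move=> n; rewrite ys_0.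
apply: (ex_series_ext (fun M => plus (ys b N M) (zs b N M))).
  by move=> M; rewrite ys_S.
by apply: ex_series_plus => //; apply: ex_zs.
Qed.

Lemma Y_rec b N : 0 < b ->
  Series (ys b N.+1) = Series (ys b N) + Series (zs b N).
Proof.
move=> hb; rewrite -Series_plus; [|exact: ex_ys|exact: ex_zs].
by apply: Series_ext => M; rewrite ys_S.
Qed.

Lemma Y_0 b : Series (ys b 0) = 0.
Proof.
apply: is_series_unique; apply: (is_series_ext (fun _ => 0)); last exact: is_series_zero.
by move=> n; rewrite ys_0.
Qed.

Lemma Z_0 b : Series (zs b 0) = 1.
Proof. exact: is_series_unique (Z0_series b). Qed.

Lemma mean_eq b N : mean_n0 b N = Series (ys b N) / Series (zs b N).
Proof.
rewrite /mean_n0 /Zcan; congr (_ / _); apply: Series_ext => M.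
  exact: n0_shell_eq.
exact: Z_shell_eq.
Qed.

Section Abs.
Lemma Zpos_abs b (Z : nat -> R) : 0 < b -> Z 0%N = 1 ->
  (forall n, Z n = (1 - E b n.+1) * Z n.+1) -> forall n, 0 < Z n.
Proof.
move=> hb h0 hr; elim => [|n IH]; first lra.
have := hr n; have := @E_lt1 b n.+1 hb (ltn0Sn n); have := E_pos b n.+1; nra.
Qed.

Lemma Zmono_abs b (Z : nat -> R) : 0 < b -> Z 0%N = 1 ->
  (forall n, Z n = (1 - E b n.+1) * Z n.+1) -> forall m n, (m <= n)%N -> Z m <= Z n.
Proof.
move=> hb h0 hr m n /leP; elim => [|k _ IH]; first lra.
have := hr k; have := Zpos_abs hb h0 hr k.+1; have := E_pos b k.+1; nra.
Qed.

Lemma Y_upper_N b (Z Y : nat -> R) : 0 < b -> Z 0%N = 1 ->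
  (forall n, Z n = (1 - E b n.+1) * Z n.+1) -> Y 0%N = 0 ->
  (forall n, Y n.+1 = Y n + Z n) -> forall N, Y N <= INR N * Z N.
Proof.
move=> hb h0 hr hY0 hY N.
suff : forall n, (n <= N)%N -> Y n <= INR n * Z N by apply; apply: leqnn.
elim => [|n IH] hn; first by rewrite hY0 /=; lra.
rewrite hY S_INR; have := IH (ltnW hn); have := Zmono_abs hb h0 hr (ltnW hn); lra.
Qed.

Lemma Y_ge0_abs b (Z Y : nat -> R) : 0 < b -> Z 0%N = 1 ->
  (forall n, Z n = (1 - E b n.+1) * Z n.+1) -> Y 0%N = 0 ->
  (forall n, Y n.+1 = Y n + Z n) -> forall N, 0 <= Y N.
Proof.
move=> hb h0 hr hY0 hY; elim => [|n IH]; first lra.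
rewrite hY; have := Zpos_abs hb h0 hr n; lra.
Qed.

Lemma Y_upper_exp b (Z Y : nat -> R) : 0 < b -> Z 0%N = 1 ->
  (forall n, Z n = (1 - E b n.+1) * Z n.+1) -> Y 0%N = 0 ->
  (forall n, Y n.+1 = Y n + Z n) -> forall N, Y N <= Z N * exp (b * INR N).
Proof.
move=> hb h0 hr hY0 hY N.
set q := E b N.
have hq0 : 0 < q by apply: E_pos.
have hq1 : q <= 1.
  have := @E_mono b 0 N (Rlt_le _ _ hb) (leq0n N); rewrite /q /E /= Rmult_0_r Ropp_0 exp_0; lra.
suff : forall n, (n <= N)%N -> Y n * q <= Z n * (1 - q).
  move=> /(_ N (leqnn N)) h.
  have hZ := Zpos_abs hb h0 hr N.
  have he : q * exp (b * INR N) = 1 by rewrite /q /E -exp_plus Rplus_opp_l exp_0.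
  have hex : 0 < exp (b * INR N) by apply: exp_pos.
  have : Y N * q * exp (b * INR N) <= Z N * exp (b * INR N) by
    apply: Rmult_le_compat_r; [lra | nra].
  rewrite Rmult_assoc he Rmult_1_r //.
elim => [|n IH] hn; first by rewrite hY0; have := Zpos_abs hb h0 hr 0; nra.
rewrite hY.
have h1 := IH (ltnW hn).
have h2 := hr n.
have h3 : q <= E b n.+1 by apply: E_mono => //; lra.
have h4 := Zpos_abs hb h0 hr n.+1.
nra.
Qed.

Lemma Z_lower_abs b (Z : nat -> R) : 0 < b -> Z 0%N = 1 ->
  (forall n, Z n = (1 - E b n.+1) * Z n.+1) ->
  forall m d, (1 - INR d * E b m.+1) * Z (m + d)%N <= Z m.
Proof.
move=> hb h0 hr m; elim => [|d IH].
  by rewrite addn0 /=; lra.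
have h1 := hr (m + d)%N.
have h2 : E b (m + d).+1 <= E b m.+1 by apply: E_mono => //; [lra | lia].
have h3 := Zpos_abs hb h0 hr (m + d).+1.
have h4 := E_pos b (m + d).+1.
have h5 := E_pos b m.+1.
have h6 := pos_INR d.
rewrite addnS S_INR.
move: IH; rewrite h1 => IH.
set f := E b (m + d).+1 in h2 h4 IH *.
set e := E b m.+1 in h2 h5 IH *.
set z := Z (m + d).+1 in h3 IH *.
have k1 : 0 <= INR d * e * f * z by apply: Rmult_le_pos; [apply: Rmult_le_pos; [nra|lra]|lra].
have k2 : f * z <= e * z by nra.
nra.
Qed.

Lemma Y_lower_abs b (Z Y : nat -> R) : 0 < b -> Z 0%N = 1 ->
  (forall n, Z n = (1 - E b n.+1) * Z n.+1) -> Y 0%N = 0 ->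
  (forall n, Y n.+1 = Y n + Z n) -> forall N K, 0 <= K ->
  Z N * (INR N - INR N * INR N * exp (- (b * K)) - K) <= Y N.
Proof.
move=> hb h0 hr hY0 hY N K hK.
set eps := exp (- (b * K)).
have heps : 0 < eps by apply: exp_pos.
have hZN := Zpos_abs hb h0 hr N.
have hN := pos_INR N.
suff : forall n, (n <= N)%N -> Z N * (INR n - INR n * INR N * eps - K) <= Y n by apply.
elim => [|n IH] hn.
  rewrite hY0 /=; nra.
have hYn := Y_ge0_abs hb h0 hr hY0 hY n.
have hZn := Zpos_abs hb h0 hr n.
rewrite hY S_INR.
case: (Rlt_le_dec (INR n + 1) K) => hnK.
  have hp : 0 <= (INR n + 1) * INR N * eps.
    apply: Rmult_le_pos; [apply: Rmult_le_pos|lra]; have := pos_INR n; lra.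
  have hneg : INR n + 1 - (INR n + 1) * INR N * eps - K < 0 by lra.
  have : Z N * (INR n + 1 - (INR n + 1) * INR N * eps - K) < 0.
    rewrite Rmult_comm; apply: Rmult_neg_pos => //.
  lra.
have hlow := Z_lower_abs hb h0 hr n (N - n).
have e : (n + (N - n) = N)%N by lia.
rewrite e in hlow.
have hE : E b n.+1 <= eps.
  rewrite /E /eps; apply: exp_le; rewrite S_INR; nra.
have hd : INR (N - n) <= INR N by apply: le_INR; apply/leP; apply: leq_subr.
have hd0 := pos_INR (N - n).
have hE0 := E_pos b n.+1.
have : INR (N - n) * E b n.+1 <= INR N * eps by nra.
have := IH (ltnW hn).
nra.
Qed.
End Abs.

Lemma mean_facts a (gamma : nat -> R) N : 0 < a -> 0 < gamma N ->
  let b := a * gamma N in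
  let Z := fun n => Series (zs b n) in
  let Y := fun n => Series (ys b n) in
  0 < b /\ Z 0%N = 1 /\ (forall n, Z n = (1 - E b n.+1) * Z n.+1) /\ Y 0%N = 0 /\
  (forall n, Y n.+1 = Y n + Z n) /\ mean_n0 b N = Y N / Z N.
Proof.
move=> ha hg b Z Y.
have hb : 0 < b by rewrite /b; nra.
split => //; split; first exact: Z_0.
split; first by move=> n; apply: Z_rec.
split; first exact: Y_0.
split; first by move=> n; apply: Y_rec.
exact: mean_eq.
Qed.

Lemma lnN_pos N : (2 <= N)%N -> 0 < ln (INR N).
Proof.
move=> h; rewrite -ln_1; apply: ln_increasing; first lra.
have : INR 2 <= INR N by apply: le_INR; apply/leP.
simpl; lra.
Qed.

Lemma INR_ge2 N : (2 <= N)%N -> 2 <= INR N.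
Proof. move=> h; have : INR 2 <= INR N by apply: le_INR; apply/leP. simpl; lra. Qed.

Lemma lim_ln : is_lim_seq (fun N => ln (INR N)) p_infty.
Proof.
apply: (is_lim_comp_seq (fun y => ln y) INR p_infty p_infty is_lim_ln_p).
  by exists 0%N => n _.
exact: is_lim_seq_INR.
Qed.

Theorem corollary1 (gamma : nat -> R)
  (gamma_pos : forall N : nat, 0 < gamma N)
  (gamma_to0 : is_lim_seq gamma 0) :
  (is_lim_seq (fun N : nat => INR N * gamma N / ln (INR N)) 0 ->
     forall a : R, 0 < a ->
       is_lim_seq (fun N : nat => mean_n0 (a * gamma N) N / INR N) 0)
  /\
  (is_lim_seq (fun N : nat => INR N * gamma N / ln (INR N)) p_infty ->
     forall a : R, 0 < a ->
       is_lim_seq (fun N : nat => mean_n0 (a * gamma N) N / INR N) 1).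
Proof.
split.
- move=> hx a ha.
  set x := fun N : nat => INR N * gamma N / ln (INR N).
  apply: (is_lim_seq_le_le_loc (fun _ => 0) _
     (fun N => exp (ln (INR N) * (a * x N - 1)))).
  + exists 2%N => N hN; have {}hN : (2 <= N)%N by apply/leP.
    have [hb [h0 [hr [hY0 [hY hm]]]]] := @mean_facts a gamma N ha (gamma_pos N).
    rewrite hm.
    set b := a * gamma N in hb h0 hr hY0 hY hm *.
    have hZ := Zpos_abs hb h0 hr N.
    have hYp := Y_ge0_abs hb h0 hr hY0 hY N.
    have hup := Y_upper_exp hb h0 hr hY0 hY N.
    have hN2 := INR_ge2 hN.
    have hl := lnN_pos hN.
    split.
      apply: Rdiv_le_0_compat; last lra.
      apply: Rdiv_le_0_compat => //.
    have -> : exp (ln (INR N) * (a * x N - 1)) = exp (b * INR N) / INR N.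
      rewrite /x /b.
      have -> : ln (INR N) * (a * (INR N * gamma N / ln (INR N)) - 1)
              = a * gamma N * INR N + - ln (INR N) by field; lra.
      rewrite exp_plus exp_Ropp exp_ln; [done|lra].
    apply: Rmult_le_compat_r; first by apply: Rlt_le; apply: Rinv_0_lt_compat; lra.
    set Zn := Series (zs b N) in hZ hup *.
    set Yn := Series (ys b N) in hYp hup *.
    have -> : exp (b * INR N) = Zn * exp (b * INR N) / Zn by field; lra.
    apply: Rmult_le_compat_r => //; apply: Rlt_le; apply: Rinv_0_lt_compat; lra.
  + exact: is_lim_seq_const.
  + have h1 : is_lim_seq (fun N => a * x N - 1) (a * 0 - 1).
      apply: is_lim_seq_minus'; last exact: is_lim_seq_const.
      exact: (is_lim_seq_scal_l x a 0 hx).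
    have h2 : is_lim_seq (fun N => ln (INR N) * (a * x N - 1)) m_infty.
      apply: (is_lim_seq_mult _ _ p_infty (a * 0 - 1)) => //; first exact: lim_ln.
      apply: is_Rbar_mult_p_infty_neg; simpl; lra.
    apply: (is_lim_comp_seq exp _ m_infty 0 is_lim_exp_m) => //.
    by exists 0%N => n _.
- move=> hx a ha.
  set x := fun N : nat => INR N * gamma N / ln (INR N).
  apply: (is_lim_seq_le_le_loc
     (fun N => 1 - / INR N - 3 / a * / x N) _ (fun _ => 1)).
  + exists 2%N => N hN; have {}hN : (2 <= N)%N by apply/leP.
    have [hb [h0 [hr [hY0 [hY hm]]]]] := @mean_facts a gamma N ha (gamma_pos N).
    rewrite hm.
    set b := a * gamma N in hb h0 hr hY0 hY hm *.
    have hZ := Zpos_abs hb h0 hr N.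
    have hYp := Y_ge0_abs hb h0 hr hY0 hY N.
    have hupN := Y_upper_N hb h0 hr hY0 hY N.
    have hN2 := INR_ge2 hN.
    have hl := lnN_pos hN.
    have hg := gamma_pos N.
    set K := 3 * ln (INR N) / b.
    have hK : 0 <= K by rewrite /K; apply: Rlt_le; apply: Rdiv_lt_0_compat; lra.
    have hlow := Y_lower_abs hb h0 hr hY0 hY N hK.
    set Zn := Series (zs b N) in hZ hlow hupN *.
    set Yn := Series (ys b N) in hYp hlow hupN *.
    have heps : INR N * INR N * exp (- (b * K)) = / INR N.
      have -> : b * K = ln (INR N) + ln (INR N) + ln (INR N) by rewrite /K; field; lra.
      rewrite exp_Ropp !exp_plus exp_ln; [field|]; lra.
    rewrite heps in hlow.
    have hKx : K / INR N = 3 / a * / x N.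
      rewrite /K /x /b; field; repeat split; lra.
    split.
      have hm1 : INR N - / INR N - K <= Yn / Zn.
        apply: (Rmult_le_reg_r Zn) => //.
        have -> : Yn / Zn * Zn = Yn by field; lra.
        lra.
      have : (INR N - / INR N - K) / INR N <= Yn / Zn / INR N.
        apply: Rmult_le_compat_r => //; apply: Rlt_le; apply: Rinv_0_lt_compat; lra.
      have -> : (INR N - / INR N - K) / INR N = 1 - / INR N * / INR N - K / INR N.
        field; lra.
      rewrite hKx.
      have : / INR N * / INR N <= / INR N.
        have : / INR N <= 1 by apply: Rle_trans (_ : / 2 <= 1); [apply: Rinv_le_contravar|]; lra.
        have : 0 < / INR N by apply: Rinv_0_lt_compat; lra.
        nra.
      lra.
    apply: (Rmult_le_reg_r (INR N)); first lra.
    have -> : Yn / Zn / INR N * INR N = Yn / Zn by field; lra.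
    apply: (Rmult_le_reg_r Zn) => //.
    have -> : Yn / Zn * Zn = Yn by field; lra.
    lra.
  + have h1 : is_lim_seq (fun N => / INR N) 0.
      have := is_lim_seq_inv (fun n => INR n) p_infty is_lim_seq_INR ltac:(discriminate).
      by [].
    have h2 : is_lim_seq (fun N => / x N) 0.
      have := is_lim_seq_inv x p_infty hx ltac:(discriminate).
      by [].
    have h3 : is_lim_seq (fun N => 3 / a * / x N) (3 / a * 0).
      exact: (is_lim_seq_scal_l _ (3 / a) 0 h2).
    have h4 := is_lim_seq_minus' _ _ _ _ (is_lim_seq_minus' _ _ _ _ (is_lim_seq_const 1) h1) h3.
    have e : 1 - 0 - 3 / a * 0 = 1 by ring.
    rewrite e in h4; exact h4.
  + exact: is_lim_seq_const.
Qed.
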